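(* Let $H$ be the graph with vertices $u_1,u_2,v_1,v_2$ and edges $u_1v_1$, $u_2v_2$, $u_2v_1$ (the balanced Thick-$\mathcal{Z}$ graph with $|U_1|=|V_1|=|U_2|=|V_2|=1$). For any randomized online algorithm for online bipartite matching in the random edge arrival model, even one that knows $H$ in advance, the expected size of its matching on $H$ is at most $\frac53$, while the maximum matching has size $2$; hence no such algorithm achieves a competitive ratio greater than $\frac56$ on this instance.
   Context: Online bipartite matching in the random edge arrival model: the edges of a fixed bipartite graph arrive one at a time in a uniformly random order; upon each arrival the algorithm irrevocably decides whether to add the edge to its matching, which must remain a matching. Expectations are over the order and the algorithm's coins. *)

(* Defs.v *)
From mathcomp Require Import all_boot all_order all_algebra perm.
Set Implicit Arguments. Unset Strict Implicit. Unset Printing Implicit Defensive.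
Import Order.TTheory GRing.Theory Num.Theory.

(* Information model: the algorithm knows the graph up to isomorphism but
   vertices are anonymous; when the k-th edge arrives it observes, for each
   previously arrived edge, whether that edge shares its U-endpoint and
   whether it shares its V-endpoint.  (This is the full isomorphism type of
   the arrival history.)  A deterministic online algorithm maps the
   observed history (including the current arrival) to accept/reject.
   An accepted edge is added only if the result is still a matching
   (an algorithm may check this itself from its observations). *)

Definition observation := (seq bool * seq bool)%type.
Definition det_alg := seq observation -> bool.

Section Online.
Variables (U V E : finType) (eu : E -> U) (ev : E -> V).

Definition observe (pre : seq E) (e : E) : observation :=
  ([seq eu f == eu e | f <- pre], [seq ev f == ev e | f <- pre]).

Definition compatible (M : seq E) (e : E) : bool :=
  all (fun f => (eu f != eu e) && (ev f != ev e)) M.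

Fixpoint run_aux (alg : det_alg) (pre : seq E) (hist : seq observation)
    (M : seq E) (rest : seq E) : seq E :=
  match rest with
  | [::] => M
  | e :: r =>
      let h := rcons hist (observe pre e) in
      let M' := if alg h && compatible M e then rcons M e else M in
      run_aux alg (rcons pre e) h M' r
  end.

Definition run (alg : det_alg) (arrivals : seq E) : seq E :=
  run_aux alg [::] [::] [::] arrivals.

Definition arrival (s : {perm E}) : seq E := [seq s e | e <- enum E].

Definition det_expected (R : numFieldType) (alg : det_alg) : R :=
  (\sum_(s : {perm E}) (size (run alg (arrival s)))%:R) / (#|E|`!)%:R.

(* A randomized algorithm: a probability distribution (weights w over a
   finite index type I) over deterministic algorithms. *)
Definition rand_expected (R : numFieldType) (I : finType) (w : I -> R)
    (algs : I -> det_alg) : R :=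
  \sum_(i : I) w i * det_expected R (algs i).

Definition is_matching (M : {set E}) : bool :=
  [forall e in M, forall f in M, (e != f) ==> ((eu e != eu f) && (ev e != ev f))].

Definition max_matching_size : nat :=
  \max_(M : {set E} | is_matching M) #|M|.

End Online.

(* The graph H: vertices u1,u2 (U = 'I_2) and v1,v2 (V = 'I_2);
   edges 0 = u1v1, 1 = u2v2, 2 = u2v1. *)
Definition H_eu (e : 'I_3) : 'I_2 := if val e == 0 then ord0 else ord_max.
Definition H_ev (e : 'I_3) : 'I_2 := if val e == 1 then ord_max else ord0.

(* Main.v *)
Require Import Defs.
From mathcomp Require Import all_boot all_order all_algebra perm.
Import Order.TTheory GRing.Theory Num.Theory.
Definition o0 : 'I_3 := @Ordinal 3 0 isT.
Definition o1 : 'I_3 := @Ordinal 3 1 isT.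
Definition o2 : 'I_3 := @Ordinal 3 2 isT.
Definition L := [:: [:: o0;o1;o2]; [:: o0;o2;o1]; [:: o1;o0;o2]; [:: o1;o2;o0]; [:: o2;o0;o1]; [:: o2;o1;o0]].

Lemma enumI3 : enum 'I_3 = [:: o0; o1; o2].
Proof. apply: (inj_map val_inj). by rewrite val_enum_ord. Qed.

Lemma ord3 (x : 'I_3) : x = o0 \/ x = o1 \/ x = o2.
Proof. case: x => [[|[|[|m]]] H]; try (by left; apply/val_inj); try (by right;left; apply/val_inj); try (by right;right; apply/val_inj). Qed.

Lemma arrL s : arrival s \in L.
Proof.
rewrite /arrival enumI3 /=.
have i01 : s o0 != s o1 by rewrite (inj_eq perm_inj).
have i02 : s o0 != s o2 by rewrite (inj_eq perm_inj).
have i12 : s o1 != s o2 by rewrite (inj_eq perm_inj).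
move: i01 i02 i12.
by case: (ord3 (s o0)) => [->|[->|->]]; case: (ord3 (s o1)) => [->|[->|->]]; case: (ord3 (s o2)) => [->|[->|->]].
Qed.

Lemma arrE (s : {perm 'I_3}) : arrival s = [:: s o0; s o1; s o2].
Proof. by rewrite /arrival enumI3. Qed.

Lemma arr_inj : injective (@arrival 'I_3).
Proof.
move=> s t; rewrite !arrE => -[H0 H1 H2]; apply/permP => x.
by case: (ord3 x) => [->|[->|->]].
Qed.

Lemma pe : perm_eq [seq arrival s | s <- enum {perm 'I_3}] L.
Proof.
have U : uniq [seq arrival s | s <- enum {perm 'I_3}].
  by rewrite map_inj_uniq ?enum_uniq //; exact: arr_inj.
have S : {subset [seq arrival s | s <- enum {perm 'I_3}] <= L}.
  by move=> l /mapP [s _ ->]; exact: arrL.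
have Sz : size L <= size [seq arrival s | s <- enum {perm 'I_3}].
  by rewrite size_map -cardE card_Sn ?card_ord.
have [_ E] := uniq_min_size U S Sz.
by apply: uniq_perm.
Qed.

Lemma run3le (alg : det_alg) (x y z : 'I_3) :
  (size (run H_eu H_ev alg [:: x; y; z]) <=
  let M1 := if alg [:: observe H_eu H_ev [::] x] then [:: x] else [::] in
  let M2 := if alg [:: observe H_eu H_ev [::] x; observe H_eu H_ev [:: x] y]
               && compatible H_eu H_ev M1 y then rcons M1 y else M1 in
  size M2 + compatible H_eu H_ev M2 z)%N.
Proof.
rewrite /run /= andbT.
case: ifP => [/andP[_ ->]|_]; by rewrite ?size_rcons ?addn1 ?leq_addr.
Qed.

Lemma key alg : (\sum_(s : {perm 'I_3}) size (run H_eu H_ev alg (arrival s)) <= 10)%N.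
Proof.
rewrite -big_enum -(big_map (@arrival _) xpredT (fun x => size (run H_eu H_ev alg x))).
rewrite (perm_big _ pe) /L !big_cons big_nil ?addn0.
apply: leq_trans (leq_add (run3le _ _ _ _) (leq_add (run3le _ _ _ _) (leq_add (run3le _ _ _ _)
  (leq_add (run3le _ _ _ _) (leq_add (run3le _ _ _ _) (leq_add (run3le _ _ _ _) (leqnn 0))))))) _.
rewrite /observe /=.
have E01u : (H_eu o0 == H_eu o1) = false by [].
have E01v : (H_ev o0 == H_ev o1) = false by [].
have E02u : (H_eu o0 == H_eu o2) = false by [].
have E02v : (H_ev o0 == H_ev o2) = true by [].
have E10u : (H_eu o1 == H_eu o0) = false by [].
have E10v : (H_ev o1 == H_ev o0) = false by [].
have E12u : (H_eu o1 == H_eu o2) = true by [].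
have E12v : (H_ev o1 == H_ev o2) = false by [].
have E20u : (H_eu o2 == H_eu o0) = false by [].
have E20v : (H_ev o2 == H_ev o0) = true by [].
have E21u : (H_eu o2 == H_eu o1) = true by [].
have E21v : (H_ev o2 == H_ev o1) = false by [].
rewrite ?E01u ?E01v ?E02u ?E02v ?E10u ?E10v ?E12u ?E12v ?E20u ?E20v ?E21u ?E21v.
case: (alg [:: ([::], [::])]);
case: (alg [:: ([::], [::]); ([:: false], [:: false])]);
case: (alg [:: ([::], [::]); ([:: false], [:: true])]);
case: (alg [:: ([::], [::]); ([:: true], [:: false])]); by [].
Qed.

Lemma mm : max_matching_size H_eu H_ev = 2%N.
Proof.
apply/eqP; rewrite eqn_leq; apply/andP; split.
  apply/bigmax_leqP => M HM.
  rewrite -(card_in_imset (f := H_eu)).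
    by rewrite (leq_trans (max_card _)) ?card_ord.
  move=> x y xM yM E; apply/eqP/negPn/negP => nxy.
  by move/forall_inP: HM => /(_ x xM)/forall_inP/(_ y yM); rewrite nxy E eqxx.
have HM : is_matching H_eu H_ev [set o0; o1].
  by apply/forall_inP => x /set2P [] -> ; apply/forall_inP => y /set2P [] ->.
apply: leq_trans (leq_bigmax_cond _ HM).
by rewrite cards2.
Qed.

Local Open Scope ring_scope.
Import Order.TTheory GRing.Theory Num.Theory.

Lemma det_le (R : realFieldType) alg : det_expected H_eu H_ev R alg <= 5%:R / 3%:R.
Proof.
rewrite /det_expected -natr_sum card_ord.
have -> : ((3`!)%N%:R : R) = 6%:R by [].
rewrite ler_pdivrMr ?ltr0n // mulrAC -natrM ler_pdivlMr ?ltr0n // -natrM ler_nat.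
exact: leq_trans (leq_mul (key alg) (leqnn 3)) _.
Qed.

Theorem lemma11 (R : realFieldType) (I : finType) (w : I -> R)
    (algs : I -> det_alg) :
  (forall i, 0 <= w i) -> \sum_(i : I) w i = 1 ->
  [/\ rand_expected H_eu H_ev w algs <= 5%:R / 3%:R,
      max_matching_size H_eu H_ev = 2%N &
      rand_expected H_eu H_ev w algs
        <= 5%:R / 6%:R * (max_matching_size H_eu H_ev)%:R].
Proof.
move=> w0 w1.
have B : rand_expected H_eu H_ev w algs <= 5%:R / 3%:R.
  rewrite /rand_expected.
  apply: le_trans (_ : \sum_i w i * (5%:R / 3%:R) <= _).
    by apply: ler_sum => i _; apply: ler_wpM2l => //; exact: det_le.
  by rewrite -mulr_suml w1 mul1r.
split => //; first exact: mm.
rewrite mm; apply: (le_trans B).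
have -> : (5%:R / 6%:R * 2%:R : R) = 5%:R / 3%:R.
  rewrite -mulrA; congr (_ * _); have -> : (6%:R : R) = 3%:R * 2%:R by rewrite -natrM.
  by rewrite invfM -mulrA mulVf ?mulr1 // pnatr_eq0.
by [].
Qed.
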